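(* Let $\Theta$ be a space of input histories satisfying the free-choice condition, and let $(\Theta'_k)_{k\in\max\mathrm{Ext}(\Theta)}$ be a family of spaces of input histories with $E^\Theta\cap E^{\Theta'_k}=\emptyset$ for all $k$. Assume that the families of input sets $(I^{\Theta'_k}_\omega)_{\omega\in E^{\Theta'_k}}$ are identical for all $k\in\max\mathrm{Ext}(\Theta)$ and that every $\Theta'_k$ satisfies the free-choice condition. Then $$\mathrm{CC}\big(\Theta\rightsquigarrow(\Theta'_k)_k\big)=\big\{\hat\Theta\rightsquigarrow(\hat\Theta'_k)_k:\ \hat\Theta\in\mathrm{CC}(\Theta),\ \hat\Theta'_k\in\mathrm{CC}(\Theta'_k)\text{ for all }k\in\max\mathrm{Ext}(\Theta)\big\}$$ (where the family $(\hat\Theta'_k)_k$ is indexed by $\max\mathrm{Ext}(\Theta)=\max\mathrm{Ext}(\hat\Theta)$).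
   Context: A partial function is a function $f$ with domain $\mathrm{dom}(f)$ a subset of an index set, values in given sets; ordered by restriction ($f\le g$ iff $\mathrm{dom}(f)\subseteq\mathrm{dom}(g)$, $g|_{\mathrm{dom}(f)}=f$). Compatible = agreeing on common domain; a compatible set $\mathcal F$ has join $\bigvee\mathcal F$ (union). $\Theta$ is $\vee$-prime if for compatible $\mathcal F\subseteq\Theta$ with $\bigvee\mathcal F\in\Theta$ we have $\bigvee\mathcal F\in\mathcal F$. A space of input histories is a finite $\vee$-prime set of partial functions; $E^\Theta=\bigcup_{h\in\Theta}\mathrm{dom}(h)$, $I^\Theta_\omega=\{h(\omega):h\in\Theta,\omega\in\mathrm{dom}(h)\}$, $\mathrm{Ext}(\Theta)=\{\bigvee\mathcal F:\emptyset\ne\mathcal F\subseteq\Theta\text{ compatible}\}$. Free-choice: maximal elements of $\mathrm{Ext}(\Theta)$ are exactly the total functions in $\prod_{\omega\in E^\Theta}I^\Theta_\omega$. $\mathrm{tips}_\Theta(h)=\mathrm{dom}(h)\setminus\bigcup\{\mathrm{dom}(k):k\in\mathrm{Ext}(\Theta),k<h\}$. Causally complete: free-choice and $|\mathrm{tips}_\Theta(h)|=1$ for all $h\in\Theta$. Order: $\Theta_1\le\Theta_2$ iff $\mathrm{Ext}(\Theta_1)\supseteq\mathrm{Ext}(\Theta_2)$. $\mathrm{CC}(\Theta)$ = maximal elements of $\{\Theta_1\le\Theta:\Theta_1\text{ causally complete}\}$. Conditional sequential composition: $\Theta\rightsquigarrow(\Theta'_k)_k=\Theta\cup\{k\vee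 h':k\in\max\mathrm{Ext}(\Theta),\ h'\in\Theta'_k\}$. *)

(* Defs.v *)
From Stdlib Require Import List.

Section PartialFunctions.
Variables (E V : Type).

Definition pfun := E -> option V.

Definition dom (h : pfun) (w : E) : Prop := h w <> None.

Definition pfle (f g : pfun) : Prop :=
  forall w v, f w = Some v -> g w = Some v.

Definition pflt (f g : pfun) : Prop := pfle f g /\ f <> g.

Definition fam := pfun -> Prop.

Definition compatible (F : fam) : Prop :=
  forall f g, F f -> F g -> forall w v u, f w = Some v -> g w = Some u -> v = u.

Definition is_join (F : fam) (h : pfun) : Prop :=
  forall w v, h w = Some v <-> exists f, F f /\ f w = Some v.

Definition vee_prime (Th : fam) : Prop :=
  forall (F : fam) h, (forall f, F f -> Th f) -> compatible F ->
    is_join F h -> Th h -> F h.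

Definition finite_fam (Th : fam) : Prop :=
  exists l : list pfun, forall h, Th h <-> In h l.

Definition space (Th : fam) : Prop := finite_fam Th /\ vee_prime Th.

Definition events (Th : fam) (w : E) : Prop := exists h, Th h /\ dom h w.

Definition inputs (Th : fam) (w : E) (v : V) : Prop :=
  exists h, Th h /\ h w = Some v.

Definition Ext (Th : fam) (k : pfun) : Prop :=
  exists F : fam, (exists f, F f) /\ (forall f, F f -> Th f) /\ compatible F /\ is_join F k.

Definition maxExt (Th : fam) (k : pfun) : Prop :=
  Ext Th k /\ forall k', Ext Th k' -> pfle k k' -> k' = k.

Definition total_in_prod (Th : fam) (k : pfun) : Prop :=
  forall w, (events Th w -> exists v, k w = Some v /\ inputs Th w v) /\
            (~ events Th w -> k w = None).

Definition free_choice (Th : fam) : Prop :=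
  forall k, maxExt Th k <-> total_in_prod Th k.

Definition tips (Th : fam) (h : pfun) (w : E) : Prop :=
  dom h w /\ ~ (exists k, Ext Th k /\ pflt k h /\ dom k w).

Definition causally_complete (Th : fam) : Prop :=
  free_choice Th /\
  forall h, Th h -> exists w, tips Th h w /\ forall w', tips Th h w' -> w' = w.

Definition space_le (Th1 Th2 : fam) : Prop :=
  forall k, Ext Th2 k -> Ext Th1 k.

Definition CC_cand (Th Th1 : fam) : Prop :=
  space Th1 /\ causally_complete Th1 /\ space_le Th1 Th.

Definition CC (Th : fam) (Th1 : fam) : Prop :=
  CC_cand Th Th1 /\ forall Th2, CC_cand Th Th2 -> space_le Th1 Th2 -> Th2 = Th1.

Definition join2 (k h' h : pfun) : Prop :=
  is_join (fun f => f = k \/ f = h') h /\ compatible (fun f => f = k \/ f = h').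

Definition seqc (Th : fam) (Th' : pfun -> fam) : fam :=
  fun h => Th h \/
    exists k h', maxExt Th k /\ Th' k h' /\ join2 k h' h.

End PartialFunctions.

Arguments dom {E V}. Arguments pfle {E V}. Arguments pflt {E V}.
Arguments compatible {E V}. Arguments is_join {E V}. Arguments vee_prime {E V}.
Arguments finite_fam {E V}. Arguments space {E V}. Arguments events {E V}.
Arguments inputs {E V}. Arguments Ext {E V}. Arguments maxExt {E V}.
Arguments total_in_prod {E V}. Arguments free_choice {E V}. Arguments tips {E V}.
Arguments causally_complete {E V}. Arguments space_le {E V}. Arguments CC_cand {E V}.
Arguments CC {E V}. Arguments join2 {E V}. Arguments seqc {E V}.

(* Main.v *)
Require Import Defs.
From Stdlib Require Import List Classical ClassicalEpsilon FunctionalExtensionality PropExtensionality.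

Definition jf {E V} (k x : pfun E V) : pfun E V :=
  fun w => match k w with Some v => Some v | None => x w end.

Definition vals {E V} (T : fam E V) (x : pfun E V) : Prop :=
  forall w v, x w = Some v -> inputs T w v.

Definition cov {E V} (T : fam E V) (x : pfun E V) : Prop :=
  (exists s, T s /\ pfle s x) /\
  forall w v, x w = Some v -> exists s, T s /\ pfle s x /\ s w = Some v.

Lemma pfle_refl {E V} (f : pfun E V) : pfle f f.
Proof. intros w v H; exact H. Qed.

Lemma pfle_trans {E V} (f g h : pfun E V) : pfle f g -> pfle g h -> pfle f h.
Proof. intros H1 H2 w v H; apply H2, H1, H. Qed.

Lemma pfle_antisym {E V} (f g : pfun E V) : pfle f g -> pfle g f -> f = g.
Proof.
  intros H1 H2; apply functional_extensionality; intro w.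
  destruct (f w) eqn:Ef.
  - symmetry; apply H1; exact Ef.
  - destruct (g w) eqn:Eg; [|reflexivity].
    rewrite (H2 _ _ Eg) in Ef; discriminate.
Qed.

Lemma fam_ext {E V} (T1 T2 : fam E V) : (forall h, T1 h <-> T2 h) -> T1 = T2.
Proof.
  intro H; apply functional_extensionality; intro h; apply propositional_extensionality; apply H.
Qed.

Lemma Ext_cov {E V} (T : fam E V) x : Ext T x <-> cov T x.
Proof.
  split.
  - intros [F [[f Ff] [HFT [Hc Hj]]]].
    assert (Hle : forall g, F g -> pfle g x).
    { intros g Fg w v Hg. apply (proj2 (Hj w v)). exists g; auto. }
    split.
    + exists f; auto.
    + intros w v Hx. apply Hj in Hx. destruct Hx as [g [Fg Hg]].
      exists g; auto.
  - intros [[s [Ts Hs]] Hcov].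
    exists (fun g => T g /\ pfle g x). repeat split.
    + exists s; auto.
    + intros f [Tf _]; exact Tf.
    + intros f g [_ Hf] [_ Hg] w v u H1 H2.
      apply Hf in H1; apply Hg in H2; congruence.
    + intro Hx. destruct (Hcov _ _ Hx) as [g [Tg [Hg Hgw]]]. exists g; auto.
    + intros [g [[_ Hg] Hgw]]. apply Hg; exact Hgw.
Qed.

Lemma in_Ext {E V} (T : fam E V) h : T h -> Ext T h.
Proof.
  intro Th. apply Ext_cov. split.
  - exists h; split; [exact Th| apply pfle_refl].
  - intros w v Hw; exists h; repeat split; auto. apply pfle_refl.
Qed.

Lemma Ext_mono {E V} (T1 T2 : fam E V) :
  (forall s, T1 s -> Ext T2 s) -> forall x, Ext T1 x -> Ext T2 x.
Proof.
  intros H x Hx. apply Ext_cov in Hx. destruct Hx as [[s [Ts Hs]] Hc].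
  apply Ext_cov. split.
  - apply H in Ts. apply Ext_cov in Ts. destruct Ts as [[r [Tr Hr]] _].
    exists r; split; auto. eapply pfle_trans; eauto.
  - intros w v Hw. destruct (Hc _ _ Hw) as [t [Tt [Ht Htw]]].
    apply H in Tt. apply Ext_cov in Tt. destruct Tt as [_ Hc2].
    destruct (Hc2 _ _ Htw) as [r [Tr [Hr Hrw]]].
    exists r; repeat split; auto. eapply pfle_trans; eauto.
Qed.

Lemma Ext_sub {E V} (T1 T2 : fam E V) :
  (forall s, T1 s -> T2 s) -> forall x, Ext T1 x -> Ext T2 x.
Proof. intros H; apply Ext_mono; intros s Hs; apply in_Ext, H, Hs. Qed.

Lemma Ext_vals {E V} (T : fam E V) x : Ext T x -> vals T x.
Proof.
  intros Hx w v Hw. apply Ext_cov in Hx. destruct Hx as [_ Hc].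
  destruct (Hc _ _ Hw) as [s [Ts [_ Hs]]]. exists s; auto.
Qed.

Lemma events_inputs {E V} (T : fam E V) w : events T w <-> exists v, inputs T w v.
Proof.
  split.
  - intros [h [Th Hd]]. unfold dom in Hd. destruct (h w) eqn:Eh; [|congruence].
    exists v, h; auto.
  - intros [v [h [Th Hh]]]. exists h; split; auto. unfold dom; congruence.
Qed.

Lemma tips_char {E V} (T : fam E V) h w :
  tips T h w <-> dom h w /\ ~ exists s, T s /\ pflt s h /\ dom s w.
Proof.
  unfold tips; split; intros [Hd Hn]; split; auto; intros [k [Hk [[Hle Hne] Hkw]]]; apply Hn.
  - exists k; repeat split; auto. apply in_Ext; auto.
  - apply Ext_cov in Hk. destruct Hk as [_ Hc].
    unfold dom in Hkw. destruct (k w) eqn:Ekw; [|congruence].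
    destruct (Hc _ _ Ekw) as [s [Ts [Hs Hsw]]].
    exists s; repeat split; auto.
    + eapply pfle_trans; eauto.
    + intro Heq; subst s. apply Hne. apply pfle_antisym; auto.
    + unfold dom; congruence.
Qed.

Lemma vee_nonempty {E V} (T : fam E V) h : vee_prime T -> T h -> exists w v, h w = Some v.
Proof.
  intros Hv Th. apply NNPP; intro Hn.
  assert (H := Hv (fun _ => False) h (fun f Hf => False_ind _ Hf)).
  apply H; auto.
  - intros f g [].
  - intros w v; split; [intro Hw; exfalso; apply Hn; eauto | intros [f [[] _]]].
Qed.

Lemma pflt_irrefl {E V} (f : pfun E V) : ~ pflt f f.
Proof. intros [_ H]; apply H; reflexivity. Qed.

Lemma pflt_trans {E V} (f g h : pfun E V) : pflt f g -> pflt g h -> pflt f h.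
Proof.
  intros [H1 N1] [H2 N2]; split.
  - eapply pfle_trans; eauto.
  - intro Heq; subst h. apply N1. apply pfle_antisym; auto.
Qed.

Lemma min_elem {A} (R : A -> A -> Prop) (P : A -> Prop) :
  (forall x, ~ R x x) -> (forall x y z, R x y -> R y z -> R x z) ->
  forall l, (exists x, In x l /\ P x) ->
  exists x, In x l /\ P x /\ forall y, In y l -> P y -> ~ R y x.
Proof.
  intros Hirr Htr l. induction l as [|a l IH]; intros [x [Hin Px]].
  - destruct Hin.
  - destruct (classic (exists x, In x l /\ P x)) as [Hex|Hnex].
    + destruct (IH Hex) as [m [Hm [Pm Hmin]]].
      destruct (classic (P a /\ R a m)) as [[Pa Ram]|Hno].
      * exists a; split; [left; auto|split; auto].
        intros y [<-|Hy] Py Rya; [apply (Hirr a); auto|].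
        apply (Hmin y Hy Py). eapply Htr; eauto.
      * exists m; split; [right; auto|split; auto].
        intros y [<-|Hy] Py Rym; [apply Hno; auto|].
        apply (Hmin y Hy Py Rym).
    + exists a. destruct Hin as [<-|Hin]; [|exfalso; apply Hnex; eauto].
      split; [left; auto|split; auto].
      intros y [<-|Hy] Py Ry; [apply (Hirr a); auto|apply Hnex; eauto].
Qed.

Lemma fin_of_sub {E V} (P : fam E V) l : (forall h, P h -> In h l) -> finite_fam P.
Proof.
  revert P; induction l as [|a l IH]; intros P H.
  - exists nil; intro h; split; [apply H|intros []].
  - destruct (IH (fun h => P h /\ h <> a)) as [l' Hl'].
    { intros h [Ph Hne]. destruct (H h Ph) as [<-|Hin]; [congruence|auto]. }
    destruct (classic (P a)) as [Pa|nPa].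
    + exists (a :: l'); intro h; split.
      * intro Ph. destruct (classic (h = a)) as [->|Hne]; [left; auto|right; apply Hl'; auto].
      * intros [<-|Hin]; auto. apply Hl' in Hin; tauto.
    + exists l'; intro h; split.
      * intro Ph. apply Hl'. split; auto. intros ->; auto.
      * intro Hin; apply Hl' in Hin; tauto.
Qed.

Lemma vee_sub {E V} (T1 T2 : fam E V) : (forall h, T1 h -> T2 h) -> vee_prime T2 -> vee_prime T1.
Proof. intros Hs Hv F h HF Hc Hj Th. apply (Hv F h); auto. Qed.

Lemma fin_sub {E V} (T1 T2 : fam E V) : (forall h, T1 h -> T2 h) -> finite_fam T2 -> finite_fam T1.
Proof. intros Hs [l Hl]. apply (fin_of_sub _ l). intros h H; apply Hl, Hs, H. Qed.
Fixpoint joinl {E V} (s : list (pfun E V)) : pfun E V :=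
  match s with nil => fun _ => None | f :: s' => jf f (joinl s') end.

Fixpoint subs {A} (l : list A) : list (list A) :=
  match l with nil => nil :: nil | a :: l' => map (cons a) (subs l') ++ subs l' end.

Lemma subs_ex {A} (l : list A) (P : A -> Prop) :
  exists s, In s (subs l) /\ forall f, In f s <-> In f l /\ P f.
Proof.
  induction l as [|a l IH].
  - exists nil; split; [left; auto|]. intro f; simpl; tauto.
  - destruct IH as [s [Hs Hf]]. simpl.
    destruct (classic (P a)) as [Pa|nPa].
    + exists (a :: s); split.
      * apply in_or_app; left; apply in_map; auto.
      * intro f; simpl; rewrite Hf; split.
        -- intros [<-|H]; tauto.
        -- intros [[<-|H] Pf]; auto.
    + exists s; split.
      * apply in_or_app; right; auto.
      * intro f; rewrite Hf; simpl; split; [tauto|].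
        intros [[<-|H] Pf]; tauto.
Qed.

Lemma joinl_some {E V} (s : list (pfun E V)) w v :
  joinl s w = Some v -> exists f, In f s /\ f w = Some v.
Proof.
  induction s as [|a s IH]; simpl; [discriminate|].
  unfold jf. destruct (a w) eqn:Ea.
  - intro H; inversion H; subst; exists a; auto.
  - intro H; destruct (IH H) as [f [Hf Hfw]]; exists f; auto.
Qed.

Lemma joinl_none {E V} (s : list (pfun E V)) w :
  joinl s w = None -> forall f, In f s -> f w = None.
Proof.
  induction s as [|a s IH]; simpl; [intros _ f []|].
  unfold jf. destruct (a w) eqn:Ea; [discriminate|].
  intros H f [<-|Hf]; auto.
Qed.

Lemma joinl_eq {E V} (s : list (pfun E V)) x :
  (forall f, In f s -> pfle f x) ->
  (forall w v, x w = Some v -> exists f, In f s /\ f w = Some v) -> joinl s = x.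
Proof.
  intros H1 H2. apply functional_extensionality; intro w.
  destruct (joinl s w) eqn:Ej.
  - destruct (joinl_some _ _ _ Ej) as [f [Hf Hfw]]. symmetry; apply (H1 f Hf); auto.
  - destruct (x w) eqn:Ex; auto.
    destruct (H2 _ _ Ex) as [f [Hf Hfw]]. rewrite (joinl_none _ _ Ej f Hf) in Hfw; discriminate.
Qed.

Lemma Ext_fin {E V} (T : fam E V) : finite_fam T -> exists L, forall x, Ext T x -> In x L.
Proof.
  intros [l Hl]. exists (map joinl (subs l)). intros x Hx.
  destruct (subs_ex l (fun f => pfle f x)) as [s [Hs Hsf]].
  replace x with (joinl s). { apply in_map; auto. }
  apply joinl_eq.
  - intros f Hf; apply Hsf in Hf; tauto.
  - intros w v Hw. apply Ext_cov in Hx. destruct Hx as [_ Hc].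
    destruct (Hc _ _ Hw) as [f [Tf [Hf Hfw]]]. exists f; split; auto.
    apply Hsf; split; auto. apply Hl; auto.
Qed.

Definition choosev {E V} (T : fam E V) (w : E) : option V :=
  match excluded_middle_informative (exists v, inputs T w v) with
  | left H => Some (proj1_sig (constructive_indefinite_description _ H))
  | right _ => None end.

Lemma choosev_spec {E V} (T : fam E V) w :
  ((exists v, inputs T w v) -> exists v, choosev T w = Some v /\ inputs T w v) /\
  (~ (exists v, inputs T w v) -> choosev T w = None).
Proof.
  unfold choosev. destruct (excluded_middle_informative _) as [H|H]; split; intro H'.
  - destruct (constructive_indefinite_description _ H) as [v Hv]; simpl. exists v; auto.
  - contradiction.
  - contradiction.
  - reflexivity.
Qed.

Lemma extend_total {E V} (T : fam E V) x : vals T x -> exists t, total_in_prod T t /\ pfle x t.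
Proof.
  intro Hx. exists (jf x (choosev T)). split.
  - intro w. split.
    + intro He. unfold jf. destruct (x w) eqn:Exw.
      * exists v; split; auto.
      * apply events_inputs in He. destruct (proj1 (choosev_spec T w) He) as [v [H1 H2]]. eauto.
    + intro Hne. unfold jf. destruct (x w) eqn:Exw.
      * exfalso; apply Hne, events_inputs; exists v; apply Hx; auto.
      * apply (proj2 (choosev_spec T w)). intro H; apply Hne, events_inputs, H.
  - intros w v Hw; unfold jf; rewrite Hw; auto.
Qed.

Lemma total_vals {E V} (T : fam E V) t : total_in_prod T t -> vals T t.
Proof.
  intros Ht w v Hw. destruct (Ht w) as [H1 H2].
  destruct (classic (events T w)) as [He|Hne].
  - destruct (H1 He) as [u [Hu Hi]]. congruence.
  - rewrite (H2 Hne) in Hw; discriminate.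
Qed.

Lemma total_ext {E V} (T1 T2 : fam E V) :
  (forall w v, inputs T1 w v <-> inputs T2 w v) -> forall t, total_in_prod T1 t -> total_in_prod T2 t.
Proof.
  intros Hi t Ht w. destruct (Ht w) as [H1 H2].
  assert (He : events T1 w <-> events T2 w).
  { rewrite !events_inputs. split; intros [v Hv]; exists v; apply Hi; auto. }
  split.
  - intro H. destruct (H1 (proj2 He H)) as [v [Hv Hvi]]. exists v; split; auto; apply Hi; auto.
  - intro H. apply H2. intro H'; apply H, He, H'.
Qed.

Lemma total_max {E V} (T : fam E V) t x : total_in_prod T t -> vals T x -> pfle t x -> x = t.
Proof.
  intros Ht Hx Hle. apply pfle_antisym; auto.
  intros w v Hw. destruct (Ht w) as [H1 _].
  assert (He : events T w) by (apply events_inputs; exists v; apply Hx; auto).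
  destruct (H1 He) as [u [Hu _]]. rewrite (Hle _ _ Hu) in Hw. congruence.
Qed.

Lemma fc_of_totals {E V} (T : fam E V) :
  (forall t, total_in_prod T t -> Ext T t) -> free_choice T.
Proof.
  intros H k; split.
  - intros [Hk Hmax]. destruct (extend_total T k (Ext_vals _ _ Hk)) as [t [Ht Hle]].
    rewrite <- (Hmax t (H t Ht) Hle). exact Ht.
  - intros Ht. split; [apply H; auto|].
    intros k' Hk' Hle. apply (total_max T); auto. apply Ext_vals; auto.
Qed.

Lemma maxExt_eq {E V} (T1 T2 : fam E V) :
  free_choice T1 -> free_choice T2 -> (forall w v, inputs T1 w v <-> inputs T2 w v) ->
  forall k, maxExt T1 k <-> maxExt T2 k.
Proof.
  intros F1 F2 Hi k. rewrite (F1 k), (F2 k). split; apply total_ext; firstorder.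
Qed.

Lemma maxExt_Ext {E V} (T : fam E V) k : maxExt T k -> Ext T k.
Proof. intros [H _]; exact H. Qed.

Lemma vee_Ext_eq {E V} (T1 T2 : fam E V) :
  vee_prime T1 -> vee_prime T2 -> (forall x, Ext T1 x -> Ext T2 x) -> (forall x, Ext T2 x -> Ext T1 x) ->
  T1 = T2.
Proof.
  assert (Half : forall T1 T2 : fam E V, vee_prime T1 ->
            (forall x, Ext T1 x -> Ext T2 x) -> (forall x, Ext T2 x -> Ext T1 x) ->
            forall h, T1 h -> T2 h).
  { intros A B HvA HAB HBA h Ah. apply NNPP; intro nBh.
    set (F := fun t => A t /\ exists s, B s /\ pfle t s /\ pfle s h).
    assert (HF : F h).
    { apply (HvA F h).
      - intros f [Af _]; exact Af.
      - intros f g [_ [s [_ [Hf1 Hf2]]]] [_ [s' [_ [Hg1 Hg2]]]] w v u H1 H2.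
        apply Hf1, Hf2 in H1. apply Hg1, Hg2 in H2. congruence.
      - intros w v; split.
        + intro Hw. assert (Bh : Ext B h) by (apply HAB, in_Ext; auto).
          apply Ext_cov in Bh. destruct Bh as [_ Hc]. destruct (Hc _ _ Hw) as [s [Bs [Hs Hsw]]].
          assert (As : Ext A s) by (apply HBA, in_Ext; auto).
          apply Ext_cov in As. destruct As as [_ Hc2]. destruct (Hc2 _ _ Hsw) as [t [At [Ht Htw]]].
          exists t; split; auto. split; auto. exists s; auto.
        + intros [f [[_ [s [_ [H1 H2]]]] Hf]]. apply H2, H1, Hf.
      - exact Ah. }
    destruct HF as [_ [s [Bs [H1 H2]]]].
    assert (s = h) by (apply pfle_antisym; auto). subst; contradiction. }
  intros H1 H2 H12 H21. apply fam_ext; intro h; split; apply Half; auto.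
Qed.
Definition resT {E V} (S T : fam E V) : fam E V := fun s => S s /\ vals T s.

Definition cc_tips {E V} (S : fam E V) : Prop :=
  forall h, S h -> exists w, tips S h w /\ forall w', tips S h w' -> w' = w.

Lemma ext_res {E V} (S T : fam E V) :
  (forall x, Ext T x -> Ext S x) -> forall x, Ext T x -> Ext (resT S T) x.
Proof.
  intros HTS x Hx. assert (Hv := Ext_vals _ _ Hx). apply HTS in Hx.
  apply Ext_cov in Hx. destruct Hx as [[s [Ss Hs]] Hc]. apply Ext_cov. split.
  - exists s; repeat split; auto. intros w v Hw; apply Hv, Hs, Hw.
  - intros w v Hw. destruct (Hc _ _ Hw) as [r [Sr [Hr Hrw]]].
    exists r; repeat split; auto. intros w' v' Hw'; apply Hv, Hr, Hw'.
Qed.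

Lemma res_inputs {E V} (S T : fam E V) :
  (forall x, Ext T x -> Ext S x) -> forall w v, inputs (resT S T) w v <-> inputs T w v.
Proof.
  intros HTS w v; split.
  - intros [h [[Sh Hv] Hw]]. apply Hv, Hw.
  - intros [h [Th Hw]]. assert (H := ext_res S T HTS h (in_Ext _ _ Th)).
    apply Ext_cov in H. destruct H as [_ Hc]. destruct (Hc _ _ Hw) as [s [Rs [_ Hs]]].
    exists s; auto.
Qed.

Lemma L1 {E V} (S T : fam E V) :
  space S -> cc_tips S -> free_choice T -> (forall x, Ext T x -> Ext S x) ->
  CC_cand T (resT S T) /\ (forall w v, inputs (resT S T) w v <-> inputs T w v).
Proof.
  intros [HfS HvS] Hcc HfcT HTS.
  assert (Hin := res_inputs S T HTS).
  split; [|exact Hin].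
  split; [|split].
  - split.
    + apply (fin_sub _ S); [intros h [H _]; exact H|exact HfS].
    + apply (vee_sub _ S); [intros h [H _]; exact H|exact HvS].
  - split.
    + apply fc_of_totals. intros t Ht. idtac.
      apply ext_res; auto. apply maxExt_Ext. apply HfcT.
      apply (total_ext (resT S T)); auto.
    + intros h [Sh Hvh]. destruct (Hcc h Sh) as [w [Hw Hu]].
      assert (Heq : forall w, tips (resT S T) h w <-> tips S h w).
      { intro w0. rewrite !tips_char. split; intros [Hd Hn]; split; auto; intro Hex; apply Hn.
        - destruct Hex as [s [Ss [Hlt Hsw]]]. exists s; split; [split; [exact Ss|]|split; [exact Hlt|exact Hsw]].
          intros w1 v1 H1; apply Hvh, (proj1 Hlt), H1.
        - destruct Hex as [s [[Ss _] [Hlt Hsw]]]. exists s; auto. }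
      exists w; split; [apply Heq; auto|]. intros w' Hw'; apply Hu, Heq, Hw'.
  - intros x Hx; apply ext_res; auto.
Qed.

Lemma cand_cc {E V} (T S : fam E V) : CC_cand T S -> cc_tips S.
Proof. intros [_ [[_ H] _]] h Sh. exact (H h Sh). Qed.

Lemma L2 {E V} (T S : fam E V) :
  free_choice T -> CC T S ->
  resT S T = S /\ (forall w v, inputs S w v <-> inputs T w v) /\ (forall k, maxExt S k <-> maxExt T k).
Proof.
  intros HfcT [Hcand Hmax].
  destruct Hcand as [Hsp [Hcc Hle]].
  destruct (L1 S T Hsp (cand_cc T S (conj Hsp (conj Hcc Hle))) HfcT Hle) as [Hc2 Hin].
  assert (Heq : resT S T = S).
  { apply Hmax; auto. intros x Hx. apply (Ext_sub (resT S T)); auto. intros h [H _]; exact H. }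
  rewrite Heq in Hin. split; auto. split; auto.
  apply maxExt_eq; auto. apply Hcc.
Qed.
Definition Setting {E V} (Th : fam E V) (Th' : pfun E V -> fam E V) : Prop :=
  space Th /\ free_choice Th /\
  (forall k, maxExt Th k -> space (Th' k)) /\
  (forall k, maxExt Th k -> free_choice (Th' k)) /\
  (forall k, maxExt Th k -> forall w, events Th w -> events (Th' k) w -> False) /\
  (forall k1 k2, maxExt Th k1 -> maxExt Th k2 ->
     (forall w, events (Th' k1) w <-> events (Th' k2) w) /\
     (forall w v, events (Th' k1) w -> (inputs (Th' k1) w v <-> inputs (Th' k2) w v))).

Definition seqc' {E V} (Th : fam E V) (B : fam E V) (B' : pfun E V -> fam E V) : fam E V :=
  fun h => B h \/ exists k x, maxExt Th k /\ B' k x /\ h = jf k x.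

Definition restr {E V} (P : E -> Prop) (t : pfun E V) : pfun E V :=
  fun w => if excluded_middle_informative (P w) then t w else None.

Lemma jf_le_k {E V} (k x : pfun E V) : pfle k (jf k x).
Proof. intros w v H; unfold jf; rewrite H; auto. Qed.

Lemma jf_at {E V} (k x : pfun E V) w : k w = None -> jf k x w = x w.
Proof. intro H; unfold jf; rewrite H; auto. Qed.

Lemma jf_mono {E V} (k x y : pfun E V) : pfle y x -> pfle (jf k y) (jf k x).
Proof. intros H w v; unfold jf; destruct (k w); auto. Qed.


Lemma maxk_dom {E V} (Th : fam E V) Th' k : Setting Th Th' -> maxExt Th k ->
  (forall w, events Th w -> exists v, k w = Some v) /\ (forall w, ~ events Th w -> k w = None).
Proof.
  intros [_ [Hfc _]] Hk. apply Hfc in Hk. split; intros w Hw; destruct (Hk w) as [H1 H2].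
  - destruct (H1 Hw) as [v [Hv _]]; eauto.
  - auto.
Qed.

Lemma maxk_vals {E V} (Th : fam E V) k : maxExt Th k -> vals Th k.
Proof. intro H; apply Ext_vals, maxExt_Ext, H. Qed.

Lemma evi {E V} (T : fam E V) w v : inputs T w v -> events T w.
Proof. intro H; apply events_inputs; eauto. Qed.

Lemma disj_none {E V} (Th : fam E V) Th' k x w v : Setting Th Th' -> maxExt Th k ->
  vals (Th' k) x -> x w = Some v -> k w = None.
Proof.
  intros HS Hk Hx Hw. apply (proj2 (maxk_dom Th Th' k HS Hk)).
  intro He. destruct HS as [_ [_ [_ [_ [Hd _]]]]]. apply (Hd k Hk w He).
  apply (evi _ _ v); apply Hx; auto.
Qed.

Lemma jf_le_x {E V} (Th : fam E V) Th' k x : Setting Th Th' -> maxExt Th k ->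
  vals (Th' k) x -> pfle x (jf k x).
Proof.
  intros HS Hk Hx w v Hw. rewrite jf_at; auto. eapply disj_none; eauto.
Qed.

Lemma b_le_k {E V} (Th : fam E V) Th' k x b : Setting Th Th' -> maxExt Th k ->
  vals Th b -> pfle b (jf k x) -> pfle b k.
Proof.
  intros HS Hk Hb Hle w v Hw.
  destruct (proj1 (maxk_dom Th Th' k HS Hk) w (evi _ _ v (Hb _ _ Hw))) as [u Hu].
  assert (H := Hle _ _ Hw). unfold jf in H. rewrite Hu in H. congruence.
Qed.

Lemma jf_not_le_b {E V} (Th : fam E V) Th' k x b w v : Setting Th Th' -> maxExt Th k ->
  vals Th b -> vals (Th' k) x -> x w = Some v -> ~ pfle (jf k x) b.
Proof.
  intros HS Hk Hb Hx Hw Hle.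
  assert (H := Hle w v). rewrite jf_at in H by (eapply disj_none; eauto).
  specialize (H Hw). destruct HS as [_ [_ [_ [_ [Hd _]]]]].
  apply (Hd k Hk w); [apply (evi _ _ v), Hb, H| apply (evi _ _ v), Hx, Hw].
Qed.

Lemma inputs_same {E V} (Th : fam E V) Th' k1 k2 : Setting Th Th' -> maxExt Th k1 -> maxExt Th k2 ->
  forall w v, inputs (Th' k1) w v <-> inputs (Th' k2) w v.
Proof.
  intros HS H1 H2 w v. destruct HS as [_ [_ [_ [_ [_ Hs]]]]].
  destruct (Hs k1 k2 H1 H2) as [He Hi]. split; intro H.
  - apply Hi; auto. apply (evi _ _ v H).
  - apply Hi; auto. apply He, (evi _ _ v H).
Qed.

Lemma jf_le_jf {E V} (Th : fam E V) Th' k k2 x y : Setting Th Th' -> maxExt Th k -> maxExt Th k2 ->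
  vals (Th' k) x -> vals (Th' k2) y -> pfle (jf k2 y) (jf k x) -> k2 = k /\ pfle y x.
Proof.
  intros HS Hk Hk2 Hx Hy Hle.
  assert (Hkk : pfle k2 k).
  { apply (b_le_k Th Th' k x); auto. apply maxk_vals; auto. eapply pfle_trans; [apply jf_le_k|exact Hle]. }
  assert (k = k2) by (apply (proj2 Hk2); auto; apply maxExt_Ext; auto). subst k2.
  split; auto. intros w v Hw.
  assert (Hn : k w = None) by (eapply disj_none; eauto).
  assert (H := Hle w v). rewrite !jf_at in H by exact Hn. auto.
Qed.

Lemma jf_inj {E V} (Th : fam E V) Th' k k2 x y : Setting Th Th' -> maxExt Th k -> maxExt Th k2 ->
  vals (Th' k) x -> vals (Th' k2) y -> jf k2 y = jf k x -> k2 = k /\ y = x.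
Proof.
  intros HS Hk Hk2 Hx Hy Heq.
  destruct (jf_le_jf Th Th' k k2 x y HS Hk Hk2 Hx Hy) as [-> H1]; [rewrite Heq; apply pfle_refl|].
  destruct (jf_le_jf Th Th' k k y x HS Hk Hk Hy Hx) as [_ H2]; [rewrite Heq; apply pfle_refl|].
  split; auto; apply pfle_antisym; auto.
Qed.

Lemma exists_maxk {E V} (Th : fam E V) Th' : Setting Th Th' -> exists k, maxExt Th k.
Proof.
  intros HS. destruct (extend_total Th (fun _ => None)) as [t [Ht _]].
  { intros w v H; discriminate. }
  exists t. destruct HS as [_ [Hfc _]]. apply Hfc; auto.
Qed.

Lemma total_nonempty {E V} (T : fam E V) t : space T -> free_choice T -> total_in_prod T t ->
  exists w v, t w = Some v.
Proof.
  intros [_ Hv] Hfc Ht. apply Hfc, maxExt_Ext, Ext_cov in Ht.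
  destruct Ht as [[s [Ts Hs]] _]. destruct (vee_nonempty T s Hv Ts) as [w [v Hw]].
  exists w, v; apply Hs; auto.
Qed.

Lemma join2_jf {E V} (k x h : pfun E V) :
  (forall w v u, k w = Some v -> x w = Some u -> False) -> (join2 k x h <-> h = jf k x).
Proof.
  intro Hd. split.
  - intros [Hj _]. apply functional_extensionality; intro w. unfold jf.
    destruct (k w) eqn:Ek.
    + apply Hj. exists k; auto.
    + destruct (x w) eqn:Ex.
      * apply Hj. exists x; auto.
      * destruct (h w) eqn:Eh; auto. apply Hj in Eh. destruct Eh as [f [[->| ->] Hf]]; congruence.
  - intros ->. split.
    + intros w v; unfold jf; split.
      * destruct (k w) eqn:Ek; intro H; [exists k| exists x]; split; auto; congruence.
      * intros [f [[->| ->] Hf]]; [rewrite Hf; auto|].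
        destruct (k w) eqn:Ek; auto. exfalso; eapply Hd; eauto.
    + intros f g [->| ->] [->| ->] w v u H1 H2; try congruence; exfalso; eapply Hd; eauto.
Qed.

Lemma seqc_eq {E V} (Th : fam E V) Th' B B' : Setting Th Th' ->
  (forall k, maxExt B k <-> maxExt Th k) ->
  (forall k, maxExt Th k -> forall x, B' k x -> vals (Th' k) x) ->
  seqc B B' = seqc' Th B B'.
Proof.
  intros HS HB HB'. apply fam_ext; intro h. unfold seqc, seqc'.
  split; intros [H|[k [x [Hk [Hx Hj]]]]]; auto; right.
  - apply HB in Hk. exists k, x; split; [exact Hk|split; [exact Hx|]].
    apply (join2_jf k x h) in Hj; auto.
    intros w v u H1 H2. rewrite (disj_none Th Th' k x w u HS Hk (HB' k Hk x Hx) H2) in H1; discriminate.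
  - exists k, x; split; [apply HB; exact Hk|split; [exact Hx|]].
    apply (join2_jf k x h); auto.
    intros w v u H1 H2. rewrite (disj_none Th Th' k x w u HS Hk (HB' k Hk x Hx) H2) in H1; discriminate.
Qed.
Definition Bdata {E V} (Th : fam E V) (Th' : pfun E V -> fam E V) (B : fam E V) (B' : pfun E V -> fam E V) : Prop :=
  CC_cand Th B /\ (forall w v, inputs B w v <-> inputs Th w v) /\
  (forall k, maxExt Th k -> CC_cand (Th' k) (B' k) /\ forall w v, inputs (B' k) w v <-> inputs (Th' k) w v).

Lemma bB_vals {E V} (Th : fam E V) Th' B B' b : Bdata Th Th' B B' -> B b -> vals Th b.
Proof. intros [_ [Hi _]] Hb w v Hw. apply Hi. exists b; auto. Qed.

Lemma bB'_vals {E V} (Th : fam E V) Th' B B' k x : Bdata Th Th' B B' -> maxExt Th k -> B' k x -> vals (Th' k) x.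
Proof. intros [_ [_ H]] Hk Hx w v Hw. apply (proj2 (H k Hk)). exists x; auto. Qed.

Lemma bB'_ne {E V} (Th : fam E V) Th' B B' k x : Bdata Th Th' B B' -> maxExt Th k -> B' k x ->
  exists w v, x w = Some v.
Proof. intros [_ [_ H]] Hk Hx. destruct (H k Hk) as [[[_ Hv] _] _]. eapply vee_nonempty; eauto. Qed.

Lemma bB_Extk {E V} (Th : fam E V) Th' B B' k : Bdata Th Th' B B' -> maxExt Th k -> Ext B k.
Proof. intros [[_ [_ Hle]] _] Hk. apply Hle, maxExt_Ext, Hk. Qed.

Lemma bB_max {E V} (Th : fam E V) Th' B B' : Setting Th Th' -> Bdata Th Th' B B' ->
  forall k, maxExt B k <-> maxExt Th k.
Proof.
  intros HS [[_ [[HfcB _] _]] [Hi _]]. apply maxExt_eq; auto. apply HS.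
Qed.

Lemma jf_Ext {E V} (Th : fam E V) (B : fam E V) B' k x : maxExt Th k -> Ext B k -> Ext (B' k) x ->
  Ext (seqc' Th B B') (jf k x).
Proof.
  intros Hk HkB Hx. apply Ext_cov in HkB. apply Ext_cov in Hx. apply Ext_cov.
  destruct HkB as [_ HcK]. destruct Hx as [[y [Hy Hyx]] HcX]. split.
  - exists (jf k y); split; [right; exists k, y; auto|apply jf_mono; auto].
  - intros w v Hw. destruct (k w) eqn:Ek.
    + unfold jf in Hw; rewrite Ek in Hw. inversion Hw; subst.
      destruct (HcK _ _ Ek) as [b [Bb [Hb Hbw]]]. exists b; split; [left; auto|split; auto].
      eapply pfle_trans; [exact Hb|apply jf_le_k].
    + rewrite jf_at in Hw by auto. destruct (HcX _ _ Hw) as [z [Hz [Hzx Hzw]]].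
      exists (jf k z); split; [right; exists k, z; auto|split; [apply jf_mono; auto|]].
      rewrite jf_at; auto.
Qed.

Lemma seqc'_inputs {E V} (Th : fam E V) Th' B B' k0 : Setting Th Th' -> Bdata Th Th' B B' -> maxExt Th k0 ->
  forall w v, inputs (seqc' Th B B') w v <-> inputs Th w v \/ inputs (Th' k0) w v.
Proof.
  intros HS HD Hk0 w v. split.
  - intros [h [[Bh|[k [x [Hk [Hx ->]]]]] Hw]].
    + left. apply (bB_vals _ _ _ _ _ HD Bh); auto.
    + unfold jf in Hw. destruct (k w) eqn:Ek.
      * left. inversion Hw; subst. apply (maxk_vals Th k Hk); auto.
      * right. apply (inputs_same Th Th' k k0); auto. apply (bB'_vals _ _ _ _ _ _ HD Hk Hx); auto.
  - intros [H|H].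
    + destruct HD as [_ [Hi _]]. apply Hi in H. destruct H as [b [Bb Hb]]. exists b; split; auto; left; auto.
    + destruct HD as [_ [_ HB']]. apply (proj2 (HB' k0 Hk0)) in H. destruct H as [y [Hy Hyw]].
      exists (jf k0 y); split; [right; exists k0, y; auto|].
      rewrite jf_at; auto. eapply disj_none; eauto. intros w' v' H'. apply (proj2 (HB' k0 Hk0)). exists y; auto.
Qed.

Lemma L3_fin {E V} (Th : fam E V) Th' B B' : Setting Th Th' -> Bdata Th Th' B B' -> finite_fam (seqc' Th B B').
Proof.
  intros HS HD.
  destruct (Ext_fin Th (proj1 (proj1 HS))) as [LM HLM].
  assert (Hpart : forall lM, exists l, forall h, (exists k x, In k lM /\ maxExt Th k /\ B' k x /\ h = jf k x) -> In h l).
  { induction lM as [|a lM IH].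
    - exists nil. intros h [k [x [[] _]]].
    - destruct IH as [l Hl]. destruct (classic (maxExt Th a)) as [Ha|Ha].
      + destruct HD as [_ [_ HB']]. destruct (HB' a Ha) as [[[[la Hla] _] _] _].
        exists (map (jf a) la ++ l). intros h [k [x [[<-|Hin] [Hk [Hx ->]]]]].
        * apply in_or_app; left; apply in_map, Hla, Hx.
        * apply in_or_app; right; apply Hl; exists k, x; auto.
      + exists l. intros h [k [x [[<-|Hin] [Hk [Hx ->]]]]]; [contradiction|].
        apply Hl; exists k, x; auto. }
  destruct (Hpart LM) as [l Hl]. destruct HD as [[[[lB HlB] _] _] _].
  apply (fin_of_sub _ (lB ++ l)). intros h [Bh|[k [x [Hk [Hx ->]]]]].
  - apply in_or_app; left; apply HlB; auto.
  - apply in_or_app; right; apply Hl; exists k, x; split; [apply HLM, maxExt_Ext, Hk|auto].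
Qed.

Lemma L3_vee {E V} (Th : fam E V) Th' B B' : Setting Th Th' -> Bdata Th Th' B B' -> vee_prime (seqc' Th B B').
Proof.
  intros HS HD F h HF Hc Hj Hh.
  assert (Hle : forall f, F f -> pfle f h).
  { intros f Ff w v Hw. apply Hj. exists f; auto. }
  destruct Hh as [Bh|[k [x [Hk [Hx ->]]]]].
  - assert (HFB : forall f, F f -> B f).
    { intros f Ff. destruct (HF f Ff) as [Bf|[k [x [Hk [Hx ->]]]]]; auto. exfalso.
      destruct (bB'_ne _ _ _ _ _ _ HD Hk Hx) as [w [v Hw]].
      apply (jf_not_le_b Th Th' k x h w v HS Hk (bB_vals _ _ _ _ _ HD Bh) (bB'_vals _ _ _ _ _ _ HD Hk Hx) Hw).
      apply Hle; auto. }
    destruct HD as [[[_ HvB] _] _]. apply (HvB F h); auto.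
  - assert (Hxv := bB'_vals _ _ _ _ _ _ HD Hk Hx).
    set (G := fun y => B' k y /\ F (jf k y)).
    assert (HG : G x).
    { destruct (proj2 (proj2 HD) k Hk) as [[[_ Hv] _] _].
      apply (Hv G x); auto.
      - intros y [Hy _]; exact Hy.
      - intros f g [Hf Ff] [Hg Fg] w v u H1 H2.
        assert (Hn1 : k w = None) by (eapply (disj_none Th Th' k f w v HS Hk); eauto; eapply bB'_vals; eauto).
        apply (Hc _ _ Ff Fg w); rewrite jf_at; auto.
      - intros w v; split.
        + intro Hw. assert (Hn : k w = None) by (eapply disj_none; eauto).
          assert (Hw2 : jf k x w = Some v) by (rewrite jf_at; auto).
          apply Hj in Hw2. destruct Hw2 as [f [Ff Hf]].
          destruct (HF f Ff) as [Bf|[k2 [y [Hk2 [Hy ->]]]]].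
          * exfalso. destruct HS as [_ [_ [_ [_ [Hd _]]]]]. apply (Hd k Hk w).
            -- apply (evi _ _ v). apply (bB_vals _ _ _ _ _ HD Bf); auto.
            -- apply (evi _ _ v). apply Hxv; auto.
          * assert (Hyv := bB'_vals _ _ _ _ _ _ HD Hk2 Hy).
            destruct (jf_le_jf Th Th' k k2 x y HS Hk Hk2 Hxv Hyv (Hle _ Ff)) as [-> Hyx].
            exists y; split; [split; auto|]. rewrite jf_at in Hf; auto.
        + intros [y [[Hy Fy] Hyw]]. assert (Hyv := bB'_vals _ _ _ _ _ _ HD Hk Hy).
          assert (Hn : k w = None) by (eapply disj_none; eauto).
          assert (H := Hle _ Fy w v). rewrite !jf_at in H by auto. auto. }
    destruct HG as [_ H]; exact H.
Qed.
Lemma restr_in {E V} (P : E -> Prop) (t : pfun E V) w : P w -> restr P t w = t w.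
Proof. intro H; unfold restr; destruct (excluded_middle_informative (P w)); tauto. Qed.

Lemma restr_out {E V} (P : E -> Prop) (t : pfun E V) w : ~ P w -> restr P t w = None.
Proof. intro H; unfold restr; destruct (excluded_middle_informative (P w)); tauto. Qed.

Lemma L3_fc {E V} (Th : fam E V) Th' B B' : Setting Th Th' -> Bdata Th Th' B B' -> free_choice (seqc' Th B B').
Proof.
  intros HS HD. apply fc_of_totals. intros t Ht.
  destruct (exists_maxk Th Th' HS) as [k0 Hk0].
  assert (Hinp := seqc'_inputs Th Th' B B' k0 HS HD Hk0).
  assert (Htv := total_vals _ _ Ht).
  assert (HdisjA := proj1 (proj2 (proj2 (proj2 (proj2 HS))))).
  assert (HfcTh := proj1 (proj2 HS)).
  assert (HfcTh' := proj1 (proj2 (proj2 (proj2 HS)))).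
  set (k := restr (events Th) t).
  assert (Hkt : total_in_prod Th k).
  { intro w; split.
    - intro He. assert (He2 : events (seqc' Th B B') w).
      { apply events_inputs in He. destruct He as [v0 Hv0]. apply events_inputs. exists v0; apply Hinp; auto. }
      destruct (proj1 (Ht w) He2) as [v [Hv Hvi]]. apply Hinp in Hvi.
      exists v. unfold k; rewrite restr_in; auto. split; auto.
      destruct Hvi as [Hi|Hi]; auto. exfalso; apply (HdisjA k0 Hk0 w He (evi _ _ _ Hi)).
    - intro Hne; unfold k; apply restr_out; auto. }
  assert (Hk : maxExt Th k) by (apply HfcTh; auto).
  set (t' := restr (events (Th' k)) t).
  assert (Ht't : total_in_prod (Th' k) t').
  { intro w; split.
    - intro He. assert (He2 : events (seqc' Th B B') w).
      { apply events_inputs in He. destruct He as [v0 Hv0]. apply events_inputs. exists v0; apply Hinp.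
        right. apply (inputs_same Th Th' k k0); auto. }
      destruct (proj1 (Ht w) He2) as [v [Hv Hvi]]. apply Hinp in Hvi.
      exists v. unfold t'; rewrite restr_in; auto. split; auto.
      destruct Hvi as [Hi|Hi].
      + exfalso; apply (HdisjA k Hk w (evi _ _ _ Hi) He).
      + apply (inputs_same Th Th' k k0); auto.
    - intro Hne; unfold t'; apply restr_out; auto. }
  assert (Ht'E : Ext (B' k) t').
  { destruct (proj2 (proj2 HD) k Hk) as [[_ [_ Hle]] _]. apply Hle, maxExt_Ext, (HfcTh' k Hk); auto. }
  replace t with (jf k t').
  { apply jf_Ext; auto. apply (bB_Extk _ _ _ _ _ HD Hk). }
  apply functional_extensionality; intro w. unfold jf.
  destruct (classic (events Th w)) as [He|Hne].
  - unfold k at 1; rewrite restr_in; auto. destruct (t w) eqn:Etw; auto.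
    unfold t'; unfold restr; destruct (excluded_middle_informative _); auto.
  - unfold k at 1; rewrite restr_out; auto.
    destruct (classic (events (Th' k) w)) as [He'|Hne'].
    + unfold t'; rewrite restr_in; auto.
    + unfold t'; rewrite restr_out; auto. symmetry. destruct (t w) eqn:Etw; auto.
      exfalso. apply Htv, Hinp in Etw. destruct Etw as [Hi|Hi].
      * apply Hne, (evi _ _ _ Hi).
      * apply Hne'. apply (evi _ _ v). apply (inputs_same Th Th' k k0); auto.
Qed.
Lemma L3_tips {E V} (Th : fam E V) Th' B B' : Setting Th Th' -> Bdata Th Th' B B' -> cc_tips (seqc' Th B B').
Proof.
  intros HS HD h [Bh|[k [x [Hk [Hx ->]]]]].
  - assert (Hbv := bB_vals _ _ _ _ _ HD Bh).
    assert (Heq : forall w, tips (seqc' Th B B') h w <-> tips B h w).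
    { intro w. rewrite !tips_char. split; intros [Hd Hn]; split; auto; intro Hex; apply Hn.
      - destruct Hex as [s [Bs [Hlt Hsw]]]. exists s; split; [left; auto|auto].
      - destruct Hex as [s [[Bs|[k [x [Hk [Hx ->]]]]] [Hlt Hsw]]].
        + exists s; auto.
        + exfalso. destruct (bB'_ne _ _ _ _ _ _ HD Hk Hx) as [w1 [v1 Hw1]].
          apply (jf_not_le_b Th Th' k x h w1 v1 HS Hk Hbv (bB'_vals _ _ _ _ _ _ HD Hk Hx) Hw1).
          apply Hlt. }
    destruct HD as [[_ [[_ Hcc] _]] _]. destruct (Hcc h Bh) as [w [Hw Hu]].
    exists w; split; [apply Heq; auto|]. intros w' Hw'; apply Hu, Heq, Hw'.
  - assert (Hxv := bB'_vals _ _ _ _ _ _ HD Hk Hx).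
    destruct (proj2 (proj2 HD) k Hk) as [[_ [[_ Hcc] _]] _].
    destruct (Hcc x Hx) as [e [He Hu]].
    exists e. split.
    + rewrite tips_char in He. destruct He as [Hd Hn]. rewrite tips_char.
      unfold dom in Hd. destruct (x e) eqn:Exe; [|congruence].
      assert (Hke : k e = None) by (eapply disj_none; eauto).
      split; [unfold dom; rewrite jf_at; congruence|].
      intros [s [Hs [Hlt Hse]]]. destruct Hs as [Bs|[k2 [y [Hk2 [Hy ->]]]]].
      * unfold dom in Hse. destruct (s e) eqn:Ese; [|congruence].
        destruct HS as [_ [_ [_ [_ [Hdj _]]]]]. apply (Hdj k Hk e).
        -- apply (evi _ _ v0). apply (bB_vals _ _ _ _ _ HD Bs); auto.
        -- apply (evi _ _ v). apply Hxv; auto.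
      * assert (Hyv := bB'_vals _ _ _ _ _ _ HD Hk2 Hy).
        destruct Hlt as [Hle Hne].
        destruct (jf_le_jf Th Th' k k2 x y HS Hk Hk2 Hxv Hyv Hle) as [-> Hyx].
        apply Hn. exists y; split; auto. split; [split; auto|].
        -- intros ->; apply Hne; auto.
        -- unfold dom in *; rewrite jf_at in Hse; auto.
    + intros w Hw. apply NNPP; intro Hne.
      rewrite tips_char in Hw. destruct Hw as [Hd Hn]. apply Hn.
      unfold dom in Hd. destruct (k w) eqn:Ekw.
      * assert (HkB := bB_Extk _ _ _ _ _ HD Hk). apply Ext_cov in HkB.
        destruct HkB as [_ Hc]. destruct (Hc _ _ Ekw) as [b [Bb [Hb Hbw]]].
        exists b; split; [left; auto|]. split; [split|].
        -- eapply pfle_trans; [exact Hb|apply jf_le_k].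
        -- intro Heq. destruct (bB'_ne _ _ _ _ _ _ HD Hk Hx) as [w1 [v1 Hw1]].
           apply (jf_not_le_b Th Th' k x b w1 v1 HS Hk (bB_vals _ _ _ _ _ HD Bb) Hxv Hw1).
           rewrite Heq; apply pfle_refl.
        -- unfold dom; congruence.
      * rewrite jf_at in Hd; auto.
        assert (Hnt : ~ tips (B' k) x w) by (intro H; apply Hne, Hu, H).
        rewrite tips_char in Hnt.
        destruct (classic (exists s, B' k s /\ pflt s x /\ dom s w)) as [Hex|Hnex];
          [|exfalso; apply Hnt; split; auto].
        destruct Hex as [y [Hy [[Hyx Hyne] Hyw]]].
        exists (jf k y); split; [right; exists k, y; auto|]. split; [split|].
        -- apply jf_mono; auto.
        -- intro Heq. apply Hyne.
           apply (jf_inj Th Th' k k x y HS Hk Hk Hxv (bB'_vals _ _ _ _ _ _ HD Hk Hy) Heq).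
        -- unfold dom; rewrite jf_at; auto.
Qed.

Lemma L3 {E V} (Th : fam E V) Th' B B' : Setting Th Th' -> Bdata Th Th' B B' ->
  CC_cand (seqc' Th Th Th') (seqc' Th B B').
Proof.
  intros HS HD. split; [split; [apply (L3_fin Th Th')|apply (L3_vee Th Th')]; auto|].
  split; [split; [apply (L3_fc Th Th')|apply (L3_tips Th Th')]; auto|].
  intros z Hz; revert z Hz; apply Ext_mono. intros s [Ths|[k [x [Hk [Hx ->]]]]].
  - apply (Ext_sub B); [intros h Hh; left; auto|].
    destruct HD as [[_ [_ Hle]] _]. apply Hle, in_Ext, Ths.
  - apply jf_Ext; auto. apply (bB_Extk _ _ _ _ _ HD Hk).
    destruct (proj2 (proj2 HD) k Hk) as [[_ [_ Hle]] _]. apply Hle, in_Ext, Hx.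
Qed.
Definition Lk {E V} (S : fam E V) (Th' : pfun E V -> fam E V) (k x : pfun E V) : Prop :=
  vals (Th' k) x /\ (exists w v, x w = Some v) /\ Ext S (jf k x).

Definition Ak {E V} (S : fam E V) (Th' : pfun E V -> fam E V) (k : pfun E V) : fam E V :=
  fun x => Lk S Th' k x /\ ~ is_join (fun y => Lk S Th' k y /\ pflt y x) x.

Lemma F1 {E V} (Th : fam E V) Th' S k : (forall x, Ext (seqc' Th Th Th') x -> Ext S x) ->
  maxExt Th k -> Ext S k.
Proof.
  intros HSS Hk. apply HSS. apply (Ext_sub Th); [intros h Hh; left; auto|]. apply maxExt_Ext, Hk.
Qed.

Lemma F2 {E V} (Th : fam E V) Th' S k x : Setting Th Th' -> (forall x, Ext (seqc' Th Th Th') x -> Ext S x) ->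
  maxExt Th k -> Ext (Th' k) x -> Lk S Th' k x.
Proof.
  intros HS HSS Hk Hx. split; [apply Ext_vals; auto|split].
  - assert (Hx2 := Hx). apply Ext_cov in Hx2. destruct Hx2 as [[s [Ts Hs]] _].
    destruct HS as [_ [_ [Hsp _]]]. destruct (Hsp k Hk) as [_ Hv].
    destruct (vee_nonempty _ s Hv Ts) as [w [v Hw]]. exists w, v; apply Hs; auto.
  - apply HSS. apply jf_Ext; auto. apply maxExt_Ext, Hk.
Qed.

Lemma F3 {E V} (Th : fam E V) Th' S k x : (forall x, Ext (seqc' Th Th Th') x -> Ext S x) ->
  maxExt Th k -> vals (Th' k) x -> (exists w v, x w = Some v) ->
  (forall w v, x w = Some v -> exists y, Lk S Th' k y /\ pfle y x /\ y w = Some v) -> Lk S Th' k x.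
Proof.
  intros HSS Hk Hv Hne Hc. split; [auto|split; [auto|]].
  assert (HkS := F1 Th Th' S k HSS Hk). apply Ext_cov in HkS. destruct HkS as [[b [Sb Hb]] HcK].
  apply Ext_cov. split.
  - exists b; split; auto. eapply pfle_trans; [exact Hb|apply jf_le_k].
  - intros w v Hw. destruct (k w) eqn:Ekw.
    + unfold jf in Hw; rewrite Ekw in Hw; inversion Hw; subst.
      destruct (HcK _ _ Ekw) as [s [Ss [Hs Hsw]]]. exists s; split; auto; split; auto.
      eapply pfle_trans; [exact Hs|apply jf_le_k].
    + rewrite jf_at in Hw by auto. destruct (Hc _ _ Hw) as [y [[_ [_ Hy]] [Hyx Hyw]]].
      apply Ext_cov in Hy. destruct Hy as [_ Hcy].
      assert (Hyw2 : jf k y w = Some v) by (rewrite jf_at; auto).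
      destruct (Hcy _ _ Hyw2) as [s [Ss [Hs Hsw]]]. exists s; split; auto; split; auto.
      eapply pfle_trans; [exact Hs|apply jf_mono; auto].
Qed.

Lemma F4 {E V} (Th : fam E V) Th' S k : Setting Th Th' -> space S -> maxExt Th k ->
  exists l, forall x, Lk S Th' k x -> In x l.
Proof.
  intros HS [HfS _] Hk. destruct (Ext_fin S HfS) as [LS HLS].
  exists (map (restr (fun w => k w = None)) LS). intros x [Hv [_ Hx]].
  replace x with (restr (fun w => k w = None) (jf k x)); [apply in_map, HLS, Hx|].
  apply functional_extensionality; intro w.
  destruct (classic (k w = None)) as [Hn|Hn].
  - rewrite restr_in, jf_at; auto.
  - rewrite restr_out; auto. destruct (x w) eqn:Exw; auto.
    exfalso; apply Hn; eapply disj_none; eauto.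
Qed.

Lemma F5 {E V} (Th : fam E V) Th' S k : Setting Th Th' -> space S ->
  (forall x, Ext (seqc' Th Th Th') x -> Ext S x) -> maxExt Th k ->
  forall x, Ext (Ak S Th' k) x <-> Lk S Th' k x.
Proof.
  intros HS HSp HSS Hk x. split.
  - intro Hx. apply Ext_cov in Hx. destruct Hx as [[a [Aa Ha]] Hc].
    apply (F3 Th); auto.
    + intros w v Hw. destruct (Hc _ _ Hw) as [b [[[Hbv _] _] [_ Hbw]]]. apply Hbv; auto.
    + destruct Aa as [[_ [Hne _]] _]. destruct Hne as [w [v Hw]]. exists w, v; apply Ha; auto.
    + intros w v Hw. destruct (Hc _ _ Hw) as [b [[Hb _] [Hbx Hbw]]]. exists b; auto.
  - destruct (F4 Th Th' S k HS HSp Hk) as [l Hl].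
    intros Hx. apply NNPP; intro Hnx.
    destruct (min_elem (@pflt E V) (fun y => Lk S Th' k y /\ ~ Ext (Ak S Th' k) y)
               (@pflt_irrefl E V) (@pflt_trans E V) l) as [m [Hml [[Hm Hmn] Hmin]]].
    { exists x; split; auto. }
    apply Hmn. assert (Hred : is_join (fun y => Lk S Th' k y /\ pflt y m) m).
    { apply NNPP; intro Hirr. apply Hmn, in_Ext. split; auto. }
    assert (Hsub : forall y, Lk S Th' k y -> pflt y m -> Ext (Ak S Th' k) y).
    { intros y Hy Hym. apply NNPP; intro Hny. apply (Hmin y); auto. }
    apply Ext_cov. split.
    + destruct Hm as [_ [[w [v Hw]] _]]. apply Hred in Hw. destruct Hw as [y [[Hy Hym] Hyw]].
      assert (HyE := Hsub y Hy Hym). apply Ext_cov in HyE. destruct HyE as [[a [Aa Ha]] _].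
      exists a; split; auto. eapply pfle_trans; [exact Ha|apply Hym].
    + intros w v Hw. apply Hred in Hw. destruct Hw as [y [[Hy Hym] Hyw]].
      assert (HyE := Hsub y Hy Hym). apply Ext_cov in HyE. destruct HyE as [_ Hc].
      destruct (Hc _ _ Hyw) as [a [Aa [Ha Haw]]].
      exists a; split; auto. split; auto. eapply pfle_trans; [exact Ha|apply Hym].
Qed.

Lemma F6 {E V} (S : fam E V) Th' k : vee_prime (Ak S Th' k).
Proof.
  intros F h HF Hc Hj [Hh Hirr]. apply NNPP; intro Hn. apply Hirr.
  intros w v; split.
  - intro Hw. apply Hj in Hw. destruct Hw as [f [Ff Hfw]]. exists f; split; auto.
    split; [apply (HF f Ff)|]. split.
    + intros w' v' H'. apply Hj. exists f; auto.
    + intros ->; contradiction.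
  - intros [y [[_ [Hy _]] Hyw]]. apply Hy; auto.
Qed.

Lemma F8 {E V} (Th : fam E V) Th' S k : Setting Th Th' -> space S ->
  (forall x, Ext (seqc' Th Th Th') x -> Ext S x) -> maxExt Th k ->
  forall w v, inputs (Ak S Th' k) w v <-> inputs (Th' k) w v.
Proof.
  intros HS HSp HSS Hk w v. split.
  - intros [a [[[Hav _] _] Haw]]. apply Hav; auto.
  - intros [h [Hh Hhw]]. assert (HL := F2 Th Th' S k h HS HSS Hk (in_Ext _ _ Hh)).
    apply (F5 Th Th' S k HS HSp HSS Hk) in HL. apply Ext_cov in HL. destruct HL as [_ Hc].
    destruct (Hc _ _ Hhw) as [a [Aa [_ Haw]]]. exists a; auto.
Qed.

Lemma F9 {E V} (Th : fam E V) Th' S k : Setting Th Th' -> space S ->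
  (forall x, Ext (seqc' Th Th Th') x -> Ext S x) -> maxExt Th k -> free_choice (Ak S Th' k).
Proof.
  intros HS HSp HSS Hk. apply fc_of_totals. intros t Ht.
  apply (F5 Th Th' S k HS HSp HSS Hk). apply (F2 Th); auto.
  apply maxExt_Ext. apply (proj1 (proj2 (proj2 (proj2 HS))) k Hk).
  apply (total_ext (Ak S Th' k)); auto. apply (F8 Th); auto.
Qed.
Definition Ltip {E V} (S : fam E V) Th' (k x : pfun E V) (e : E) : Prop :=
  dom x e /\ ~ exists y, Lk S Th' k y /\ pflt y x /\ dom y e.

Lemma tips_Ak {E V} (Th : fam E V) Th' S k : Setting Th Th' -> space S ->
  (forall x, Ext (seqc' Th Th Th') x -> Ext S x) -> maxExt Th k ->
  forall x e, tips (Ak S Th' k) x e <-> Ltip S Th' k x e.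
Proof.
  intros HS HSp HSS Hk x e. unfold tips, Ltip.
  split; intros [Hd Hn]; split; auto; intros [y [Hy [Hlt Hye]]]; apply Hn; exists y; split; auto;
    apply (F5 Th Th' S k HS HSp HSS Hk); auto.
Qed.

Lemma Ymk {E V} (Th : fam E V) Th' S k x s : Setting Th Th' ->
  (forall x, Ext (seqc' Th Th Th') x -> Ext S x) -> maxExt Th k ->
  Lk S Th' k x -> S s -> pfle s (jf k x) -> (exists w v, restr (fun w => k w = None) s w = Some v) ->
  Lk S Th' k (restr (fun w => k w = None) s) /\ pfle (restr (fun w => k w = None) s) x.
Proof.
  intros HS HSS Hk [Hxv [_ Hx]] Ss Hs Hne.
  set (y := restr (fun w => k w = None) s).
  assert (Hyx : pfle y x).
  { intros w v Hw. unfold y, restr in Hw. destruct (excluded_middle_informative (k w = None)) as [Hn|Hn];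
      [|discriminate]. assert (H := Hs _ _ Hw). rewrite jf_at in H; auto. }
  split; auto. split; [intros w v Hw; apply Hxv, Hyx, Hw|split; auto].
  assert (HkS := F1 Th Th' S k HSS Hk). apply Ext_cov in HkS. destruct HkS as [_ HcK].
  apply Ext_cov. split.
  - exists s; split; auto. intros w v Hw. unfold jf. destruct (k w) eqn:Ekw.
    + assert (H := Hs _ _ Hw). unfold jf in H; rewrite Ekw in H; auto.
    + unfold y; rewrite restr_in; auto.
  - intros w v Hw. destruct (k w) eqn:Ekw.
    + unfold jf in Hw; rewrite Ekw in Hw; inversion Hw; subst.
      destruct (HcK _ _ Ekw) as [b [Sb [Hb Hbw]]]. exists b; split; auto; split; auto.
      eapply pfle_trans; [exact Hb|apply jf_le_k].
    + rewrite jf_at in Hw by auto. unfold y in Hw; rewrite restr_in in Hw by auto.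
      exists s; split; auto; split; auto. intros w' v' Hw'. unfold jf. destruct (k w') eqn:Ekw'.
      * assert (H := Hs _ _ Hw'). unfold jf in H; rewrite Ekw' in H; auto.
      * unfold y; rewrite restr_in; auto.
Qed.

Lemma two_tips {E V} (Th : fam E V) Th' S k x e1 e2 : Setting Th Th' -> space S -> cc_tips S ->
  (forall x, Ext (seqc' Th Th Th') x -> Ext S x) -> maxExt Th k ->
  Lk S Th' k x -> Ltip S Th' k x e1 -> Ltip S Th' k x e2 -> e1 <> e2 -> False.
Proof.
  intros HS [HfS HvS] Hcc HSS Hk Hx [Hd1 Hn1] [Hd2 Hn2] Hne.
  assert (HxL := Hx). destruct Hx as [Hxv [_ HxS]].
  unfold dom in Hd1, Hd2. destruct (x e1) as [v1|] eqn:Ex1; [|congruence].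
  destruct (x e2) as [v2|] eqn:Ex2; [|congruence].
  assert (Hk1 : k e1 = None) by (eapply disj_none; eauto).
  assert (Hk2 : k e2 = None) by (eapply disj_none; eauto).
  destruct HfS as [lS HlS].
  destruct (min_elem (@pflt E V) (fun s => S s /\ pfle s (jf k x) /\ dom s e1)
              (@pflt_irrefl E V) (@pflt_trans E V) lS) as [s1 [Hs1l [[Ss1 [Hs1 Hs1e]] Hmin]]].
  { apply Ext_cov in HxS. destruct HxS as [_ Hc].
    assert (H : jf k x e1 = Some v1) by (rewrite jf_at; auto).
    destruct (Hc _ _ H) as [s [Ss [Hs Hse]]]. exists s; split; [apply HlS; auto|].
    split; auto. split; auto. unfold dom; congruence. }
  set (y := fun s : pfun E V => restr (fun w => k w = None) s).
  assert (Hs1e2 : dom s1 e2).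
  { unfold dom; intro Hs1n. apply Hn1.
    unfold dom in Hs1e. destruct (s1 e1) as [u|] eqn:Es1; [|congruence].
    destruct (Ymk Th Th' S k x s1 HS HSS Hk HxL Ss1 Hs1) as [HyL Hyx].
    { exists e1, u. rewrite restr_in; auto. }
    exists (y s1); split; auto. split; [split; auto|].
    - intro Heq. assert (H := f_equal (fun f => f e2) Heq). simpl in H.
      unfold y in H; rewrite restr_in in H by auto. congruence.
    - unfold dom, y; rewrite restr_in; auto; congruence. }
  assert (Ht1 : tips S s1 e1).
  { rewrite tips_char. split; auto. intros [t [St [Hlt Hte]]].
    apply (Hmin t); auto. apply HlS; auto. split; auto. split; auto.
    eapply pfle_trans; [apply Hlt|exact Hs1]. }
  destruct (Hcc s1 Ss1) as [w0 [_ Hu]].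
  assert (Hnt2 : ~ tips S s1 e2).
  { intro H. apply Hne. rewrite (Hu e1 Ht1), (Hu e2 H). reflexivity. }
  rewrite tips_char in Hnt2.
  assert (Hex : exists t, S t /\ pflt t s1 /\ dom t e2) by (apply NNPP; intro H; apply Hnt2; auto).
  destruct Hex as [t [St [Hlt Hte2]]].
  assert (Hte1 : ~ dom t e1).
  { intro H. apply (Hmin t); auto. apply HlS; auto. split; auto. split; auto.
    eapply pfle_trans; [apply Hlt|exact Hs1]. }
  apply Hn2. unfold dom in Hte2. destruct (t e2) as [u|] eqn:Et2; [|congruence].
  destruct (Ymk Th Th' S k x t HS HSS Hk HxL St) as [HyL Hyx].
  { eapply pfle_trans; [apply Hlt|exact Hs1]. }
  { exists e2, u. rewrite restr_in; auto. }
  exists (y t); split; auto. split; [split; auto|].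
  - intro Heq. assert (H := f_equal (fun f => f e1) Heq). simpl in H.
    unfold y in H; rewrite restr_in in H by auto. apply Hte1. unfold dom; congruence.
  - unfold dom, y; rewrite restr_in; auto; congruence.
Qed.

Lemma F10 {E V} (Th : fam E V) Th' S k : Setting Th Th' -> space S -> cc_tips S ->
  (forall x, Ext (seqc' Th Th Th') x -> Ext S x) -> maxExt Th k -> cc_tips (Ak S Th' k).
Proof.
  intros HS HSp Hcc HSS Hk x [HxL Hirr].
  assert (Hex : exists e, Ltip S Th' k x e).
  { apply NNPP; intro Hn. apply Hirr. intros w v; split.
    - intro Hw. assert (Hnt : ~ Ltip S Th' k x w) by (intro H; apply Hn; eauto).
      unfold Ltip in Hnt.
      assert (Hd : dom x w) by (unfold dom; congruence).
      assert (H : exists y, Lk S Th' k y /\ pflt y x /\ dom y w) by (apply NNPP; intro H; apply Hnt; auto).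
      destruct H as [y [Hy [Hyx Hyw]]]. exists y; split; [split; auto|].
      unfold dom in Hyw. destruct (y w) eqn:Eyw; [|congruence]. rewrite ((proj1 Hyx) _ _ Eyw) in Hw. congruence.
    - intros [y [[_ Hyx] Hyw]]. apply (proj1 Hyx); auto. }
  destruct Hex as [e He]. exists e; split.
  - apply (tips_Ak Th Th' S k HS HSp HSS Hk); auto.
  - intros e' He'. apply (tips_Ak Th Th' S k HS HSp HSS Hk) in He'.
    apply NNPP; intro Hne. apply (two_tips Th Th' S k x e' e HS HSp Hcc HSS Hk HxL He' He Hne).
Qed.

Lemma L4 {E V} (Th : fam E V) Th' S : Setting Th Th' -> space S -> cc_tips S ->
  (forall x, Ext (seqc' Th Th Th') x -> Ext S x) ->
  exists A A', Bdata Th Th' A A' /\ forall x, Ext (seqc' Th A A') x -> Ext S x.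
Proof.
  intros HS HSp Hcc HSS.
  assert (HThS : forall x, Ext Th x -> Ext S x).
  { intros x Hx. apply HSS. apply (Ext_sub Th); auto. intros h Hh; left; auto. }
  destruct (L1 S Th HSp Hcc (proj1 (proj2 HS)) HThS) as [HA HAi].
  exists (resT S Th), (Ak S Th'). split.
  - split; [exact HA|split; [exact HAi|]]. intros k Hk. split.
    + split; [split|split; [split|]].
      * destruct (F4 Th Th' S k HS HSp Hk) as [l Hl]. apply (fin_of_sub _ l). intros h [Hh _]; auto.
      * apply F6.
      * apply (F9 Th); auto.
      * apply (F10 Th); auto.
      * intros x Hx. apply (F5 Th Th' S k HS HSp HSS Hk). apply (F2 Th); auto.
    + apply (F8 Th); auto.
  - apply Ext_mono. intros s [[Ss _]|[k [x [Hk [[[_ [_ Hx]] _] ->]]]]].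
    + apply in_Ext; auto.
    + exact Hx.
Qed.
Lemma bd_seqc {E V} (Th : fam E V) Th' B B' : Setting Th Th' -> Bdata Th Th' B B' ->
  seqc B B' = seqc' Th B B'.
Proof.
  intros HS HD. apply (seqc_eq Th Th'); auto.
  - apply (bB_max Th Th' B B'); auto.
  - intros k Hk x Hx. apply (bB'_vals Th Th' B B' k x); auto.
Qed.

Lemma seqc'_inj {E V} (Th : fam E V) Th' A A' B B' : Setting Th Th' -> Bdata Th Th' A A' -> Bdata Th Th' B B' ->
  seqc' Th B B' = seqc' Th A A' ->
  (forall a, A a -> B a) /\ (forall k, maxExt Th k -> forall a, A' k a -> B' k a).
Proof.
  intros HS HA HB Heq. split.
  - intros a Aa. assert (H : seqc' Th A A' a) by (left; auto). rewrite <- Heq in H.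
    destruct H as [Ba|[k [x [Hk [Hx ->]]]]]; auto. exfalso.
    destruct (bB'_ne _ _ _ _ _ _ HB Hk Hx) as [w [v Hw]].
    apply (jf_not_le_b Th Th' k x (jf k x) w v HS Hk (bB_vals _ _ _ _ _ HA Aa) (bB'_vals _ _ _ _ _ _ HB Hk Hx) Hw).
    apply pfle_refl.
  - intros k Hk a Ha. assert (H : seqc' Th A A' (jf k a)) by (right; exists k, a; auto).
    rewrite <- Heq in H. assert (Hav := bB'_vals _ _ _ _ _ _ HA Hk Ha).
    destruct H as [Ba|[k2 [x [Hk2 [Hx Hj]]]]].
    + exfalso. destruct (bB'_ne _ _ _ _ _ _ HA Hk Ha) as [w [v Hw]].
      apply (jf_not_le_b Th Th' k a (jf k a) w v HS Hk (bB_vals _ _ _ _ _ HB Ba) Hav Hw).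
      apply pfle_refl.
    + destruct (jf_inj Th Th' k k2 a x HS Hk Hk2 Hav (bB'_vals _ _ _ _ _ _ HB Hk2 Hx) (eq_sym Hj)) as [-> ->].
      exact Hx.
Qed.

Lemma CC_vals {E V} (T S : fam E V) : CC_cand T S -> forall h, S h -> vals S h.
Proof. intros _ h Sh w v Hw. exists h; auto. Qed.

Theorem theorem2 (E V : Type) (Th : fam E V) (Th' : pfun E V -> fam E V)
  (HTh : space Th) (HfcTh : free_choice Th)
  (HTh' : forall k, maxExt Th k -> space (Th' k))
  (Hfc' : forall k, maxExt Th k -> free_choice (Th' k))
  (Hdisj : forall k, maxExt Th k -> forall w, events Th w -> events (Th' k) w -> False)
  (Hsame : forall k1 k2, maxExt Th k1 -> maxExt Th k2 ->
     (forall w, events (Th' k1) w <-> events (Th' k2) w) /\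
     (forall w v, events (Th' k1) w -> (inputs (Th' k1) w v <-> inputs (Th' k2) w v))) :
  forall Sg : fam E V,
    CC (seqc Th Th') Sg <->
    exists (hTh : fam E V) (hTh' : pfun E V -> fam E V),
      CC Th hTh /\ (forall k, maxExt Th k -> CC (Th' k) (hTh' k)) /\
      Sg = seqc hTh hTh'.
Proof.
  intro Sg.
  assert (HS : Setting Th Th') by exact (conj HTh (conj HfcTh (conj HTh' (conj Hfc' (conj Hdisj Hsame))))).
  assert (SeqS : seqc Th Th' = seqc' Th Th Th').
  { apply (seqc_eq Th Th'); auto; [tauto|]. intros k Hk x Hx. apply Ext_vals, in_Ext, Hx. }
  rewrite SeqS. split.
  - intros [Hcand Hmax].
    destruct Hcand as [HSgsp [HSgcc HSgle]].
    assert (HSgc : cc_tips Sg) by exact (cand_cc (seqc' Th Th Th') Sg (conj HSgsp (conj HSgcc HSgle))).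
    destruct (L4 Th Th' Sg HS HSgsp HSgc HSgle) as [A [A' [HD Hsub]]].
    assert (Heq : seqc' Th A A' = Sg).
    { apply Hmax; auto. apply (L3 Th Th'); auto. }
    exists A, A'. split; [|split].
    + split; [apply HD|]. intros B HBc HAB.
      destruct HBc as [HBsp [HBcc HBle]] eqn:HBc'.
      destruct (L1 B Th HBsp (cand_cc Th B HBc) HfcTh HBle) as [HB0 HB0i].
      assert (HD0 : Bdata Th Th' (resT B Th) A') by (split; [exact HB0|split; [exact HB0i|apply HD]]).
      assert (Heq0 : seqc' Th (resT B Th) A' = Sg).
      { apply Hmax; [apply (L3 Th Th'); auto|].
        intros z Hz; rewrite <- Heq; revert z Hz; apply Ext_mono. intros s [[Bs _]|[k [x [Hk [Hx ->]]]]].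
        - apply (Ext_sub A); [intros h Hh; left; auto|]. apply HAB, in_Ext, Bs.
        - apply in_Ext. right; exists k, x; auto. }
      rewrite <- Heq in Heq0.
      destruct (seqc'_inj Th Th' A A' (resT B Th) A' HS HD HD0 Heq0) as [HAB0 _].
      apply vee_Ext_eq; [apply HBsp|apply HD|exact HAB|].
      apply Ext_mono. intros s As. apply in_Ext. apply (HAB0 s As).
    + intros k0 Hk0. split; [apply HD; auto|]. intros B' HBc HAB'.
      destruct HBc as [HBsp [HBcc HBle]] eqn:HBc'.
      destruct (L1 B' (Th' k0) HBsp (cand_cc _ B' HBc) (Hfc' k0 Hk0) HBle) as [HB0 HB0i].
      set (A'' := fun k => if excluded_middle_informative (k = k0) then resT B' (Th' k0) else A' k).
      assert (HD'' : Bdata Th Th' A A'').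
      { split; [apply HD|split; [apply HD|]]. intros k Hk. unfold A''.
        destruct (excluded_middle_informative (k = k0)) as [->|Hne]; auto. apply HD; auto. }
      assert (Heq0 : seqc' Th A A'' = Sg).
      { apply Hmax; [apply (L3 Th Th'); auto|].
        intros z Hz; rewrite <- Heq; revert z Hz; apply Ext_mono. intros s [As|[k [x [Hk [Hx ->]]]]].
        - apply in_Ext; left; auto.
        - unfold A'' in Hx. destruct (excluded_middle_informative (k = k0)) as [->|Hne].
          + apply jf_Ext; auto. apply (bB_Extk _ _ _ _ _ HD Hk). apply HAB', in_Ext, Hx.
          + apply in_Ext; right; exists k, x; auto. }
      rewrite <- Heq in Heq0.
      destruct (seqc'_inj Th Th' A A' A A'' HS HD HD'' Heq0) as [_ HA''].
      assert (Hsub0 : forall a, A' k0 a -> resT B' (Th' k0) a).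
      { intros a Ha. assert (H := HA'' k0 Hk0 a Ha). unfold A'' in H.
        destruct (excluded_middle_informative (k0 = k0)); [exact H|congruence]. }
      apply vee_Ext_eq; [apply HBsp|apply HD; auto|exact HAB'|].
      apply Ext_mono. intros s As. apply in_Ext. apply (Hsub0 s As).
    + rewrite (bd_seqc Th Th' A A' HS HD). symmetry; exact Heq.
  - intros [hTh [hTh' [HC [HC' ->]]]].
    destruct (L2 Th hTh HfcTh HC) as [_ [Hi _]].
    assert (HD : Bdata Th Th' hTh hTh').
    { split; [apply HC|split; [exact Hi|]]. intros k Hk. split; [apply HC'; auto|].
      destruct (L2 (Th' k) (hTh' k) (Hfc' k Hk) (HC' k Hk)) as [_ [Hi' _]]. exact Hi'. }
    rewrite (bd_seqc Th Th' hTh hTh' HS HD).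
    split; [apply (L3 Th Th'); auto|].
    intros T2 HT2 HleT2. destruct HT2 as [HT2sp [HT2cc HT2le]] eqn:HT2'.
    destruct (L4 Th Th' T2 HS HT2sp (cand_cc _ T2 HT2) HT2le) as [A [A' [HDA HsubA]]].
    assert (HAeq : A = hTh).
    { apply (proj2 HC); [apply HDA|]. intros x Hx.
      assert (Hxv : vals Th x).
      { intros w v Hw. apply HDA. apply (Ext_vals A x Hx); auto. }
      assert (H : Ext (seqc' Th hTh hTh') x).
      { apply HleT2, HsubA. apply (Ext_sub A); auto. intros h Hh; left; auto. }
      apply Ext_cov in H. destruct H as [[s [Ss Hs]] Hc].
      assert (Hin : forall s, seqc' Th hTh hTh' s -> pfle s x -> hTh s).
      { intros s0 [Hs0|[k [y [Hk [Hy ->]]]]] Hle; auto. exfalso.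
        destruct (bB'_ne _ _ _ _ _ _ HD Hk Hy) as [w [v Hw]].
        apply (jf_not_le_b Th Th' k y x w v HS Hk Hxv (bB'_vals _ _ _ _ _ _ HD Hk Hy) Hw Hle). }
      apply Ext_cov. split.
      - exists s; split; auto.
      - intros w v Hw. destruct (Hc _ _ Hw) as [s0 [Ss0 [Hs0 Hs0w]]]. exists s0; auto. }
    assert (HA'eq : forall k, maxExt Th k -> A' k = hTh' k).
    { intros k Hk. apply (proj2 (HC' k Hk)); [apply HDA; auto|]. intros x Hx.
      assert (Hxv : vals (Th' k) x).
      { intros w v Hw. apply HDA; auto. apply (Ext_vals _ x Hx); auto. }
      assert (H : Ext (seqc' Th hTh hTh') (jf k x)).
      { apply HleT2, HsubA. apply jf_Ext; auto. apply (bB_Extk _ _ _ _ _ HDA Hk). }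
      apply Ext_cov in H. destruct H as [_ Hc].
      assert (Hcov : forall w v, x w = Some v -> exists s, hTh' k s /\ pfle s x /\ s w = Some v).
      { intros w v Hw. assert (Hn : k w = None) by (eapply disj_none; eauto).
        assert (Hw2 : jf k x w = Some v) by (rewrite jf_at; auto).
        destruct (Hc _ _ Hw2) as [s [Ss [Hs Hsw]]].
        destruct Ss as [Bs|[k2 [y [Hk2 [Hy ->]]]]].
        - exfalso. apply (Hdisj k Hk w).
          + apply (evi _ _ v). apply (bB_vals _ _ _ _ _ HD Bs); auto.
          + apply (evi _ _ v). apply Hxv; auto.
        - assert (Hyv := bB'_vals _ _ _ _ _ _ HD Hk2 Hy).
          destruct (jf_le_jf Th Th' k k2 x y HS Hk Hk2 Hxv Hyv Hs) as [-> Hyx].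
          exists y; split; auto; split; auto. rewrite jf_at in Hsw; auto. }
      apply Ext_cov. split; [|exact Hcov].
      apply Ext_cov in Hx. destruct Hx as [[a [Aa Ha]] _].
      destruct (bB'_ne _ _ _ _ _ _ HDA Hk Aa) as [w [v Hw]].
      destruct (Hcov w v (Ha _ _ Hw)) as [s [Ss [Hs _]]]. exists s; auto. }
    assert (Hseq : seqc' Th A A' = seqc' Th hTh hTh').
    { apply fam_ext; intro h. unfold seqc'. rewrite HAeq. split.
      - intros [H|[k [x [Hk [Hx ->]]]]]; [left; auto|right; exists k, x; rewrite <- HA'eq; auto].
      - intros [H|[k [x [Hk [Hx ->]]]]]; [left; auto|right; exists k, x; rewrite HA'eq; auto]. }
    apply vee_Ext_eq; [apply HT2sp|apply (L3_vee Th Th' hTh hTh'); auto|exact HleT2|].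
    rewrite <- Hseq. exact HsubA.
Qed.
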